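(* Suppose the sufficient coverage assumption holds with constant $C^\dagger_{\mathrm{sc}}>0$. Then with probability at least $1-\delta$, $$\sum_{i=1}^d\mathbb E_{(s,a)\sim d^{\pi^*}}\big[\|\phi_i(s,a)\mathbf 1_i\|_{\Lambda_N^{-1}}\big]\le\sqrt{\frac{\mathrm{rank}(\Sigma_{d^{\pi^*}})}{C^\dagger_{\mathrm{sc}}}}.$$
   Context: Linear MDP setting: finite $\mathcal S$, finite $\mathcal A$, discount $\gamma\in(0,1)$, initial distribution $d_0$, known feature map $\phi:\mathcal S\times\mathcal A\to\mathbb R^d$ with $\phi_i\ge0$, and $P^o_{s,a}(s')=\sum_i\phi_i(s,a)\nu^o_i(s')$ for unknown probability distributions $\nu^o_i$ on $\mathcal S$ (so $\sum_i\phi_i(s,a)=1$). $\pi^*$ is an optimal policy and $d^{\pi^*}(s,a)=(1-\gamma)\sum_t\gamma^t\Pr(s_t=s,a_t=a)$ its discounted state-action occupancy on $P^o$ from $d_0$. Dataset of $N$ transitions with $(s_t,a_t)$ i.i.d. from $\mu$; $\Lambda_N=\frac1NI+\frac1N\sum_{t=1}^N\phi(s_t,a_t)\phi(s_t,a_t)^\top$. $\mathbf 1_i$ is the $i$-th standard basis vector of $\mathbb R^d$, $\|x\|_A=\sqrt{x^\top Ax}$. $\Sigma_{d^{\pi^*}}=\mathbb E_{d^{\pi^*}}[\phi\phi^\top]$, $\Sigma^{(i,j)}_{d^{\pi^*}}=\mathbb E_{d^{\pi^*}}[(\phi_i\mathbf 1_i)(\phi_j\mathbf 1_j)^\top]$,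 $\Sigma^i_{d^{\pi^*}}=\Sigma^{(i,i)}_{d^{\pi^*}}$; it is assumed that $\Lambda=\mathbb E_\mu[\phi\phi^\top]$ and all $\Sigma^{(i,j)}_{d^{\pi^*}}$ are positive semidefinite. Sufficient coverage assumption: for all $i\in[d]$, with probability at least $1-\delta$, $\Lambda_N\succeq\frac1NI+C^\dagger_{\mathrm{sc}}\,d\,\Sigma^i_{d^{\pi^*}}$. *)

(* Defs.v *)
From HB Require Import structures.
From mathcomp Require Import all_boot all_order all_algebra.
From mathcomp Require Import all_classical all_reals all_analysis.
Set Implicit Arguments. Unset Strict Implicit. Unset Printing Implicit Defensive.
Import Order.TTheory GRing.Theory Num.Theory.
Local Open Scope ring_scope.

Section LinearMDP.
Variables (R : realType) (S A : finType) (d : nat).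

Definition is_distr (T : finType) (p : T -> R) :=
  (forall x, 0 <= p x) /\ \sum_x p x = 1.
Definition is_policy (pi : S -> A -> R) := forall s, is_distr (pi s).

Definition Pker (phi : S -> A -> 'cV[R]_d) (nu : 'I_d -> S -> R)
  (s : S) (a : A) (s' : S) : R := \sum_i phi s a i 0 * nu i s'.

Fixpoint state_dist (P : S -> A -> S -> R) (pi : S -> A -> R) (rho0 : S -> R)
  (t : nat) : S -> R :=
  match t with
  | O => rho0
  | t'.+1 => fun s' => \sum_s \sum_a
       state_dist P pi rho0 t' s * pi s a * P s a s'
  end.

Definition rseries (u : nat -> R) : R := limn (fun n => \sum_(0 <= t < n) u t).

Definition value (P : S -> A -> S -> R) (gamma : R) (r : S -> A -> R)
  (pi : S -> A -> R) (s : S) : R :=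
  rseries (fun t => gamma ^+ t *
    \sum_s' \sum_a state_dist P pi (fun x => (x == s)%:R) t s' * pi s' a * r s' a).

Definition optimal_policy P gamma r (pistar : S -> A -> R) :=
  is_policy pistar /\
  forall pi, is_policy pi -> forall s, value P gamma r pi s <= value P gamma r pistar s.

Definition occupancy (P : S -> A -> S -> R) (gamma : R) (d0 : S -> R)
  (pi : S -> A -> R) (s : S) (a : A) : R :=
  (1 - gamma) * rseries (fun t => gamma ^+ t * (state_dist P pi d0 t s * pi s a)).

Definition expSA (w : S -> A -> R) (f : S -> A -> R) : R :=
  \sum_s \sum_a w s a * f s a.
Definition expSAmx (w : S -> A -> R) (f : S -> A -> 'M[R]_d) : 'M[R]_d :=
  \sum_s \sum_a w s a *: f s a.

Definition e_ (i : 'I_d) : 'cV[R]_d := delta_mx i 0.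

Definition phie (phi : S -> A -> 'cV[R]_d) (i : 'I_d) (s : S) (a : A) : 'cV[R]_d :=
  phi s a i 0 *: e_ i.

Definition psd (M : 'M[R]_d) :=
  M^T = M /\ forall x : 'cV[R]_d, 0 <= (x^T *m M *m x) 0 0.
Definition loewner_ge (M1 M2 : 'M[R]_d) := psd (M1 - M2).

Definition mxnorm (M : 'M[R]_d) (x : 'cV[R]_d) : R := Num.sqrt ((x^T *m M *m x) 0 0).

Definition Sigma (w : S -> A -> R) (phi : S -> A -> 'cV[R]_d) : 'M[R]_d :=
  expSAmx w (fun s a => phi s a *m (phi s a)^T).
Definition Sigma_ij (w : S -> A -> R) (phi : S -> A -> 'cV[R]_d) (i j : 'I_d) : 'M[R]_d :=
  expSAmx w (fun s a => phie phi i s a *m (phie phi j s a)^T).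

Definition dataset (N : nat) := {ffun 'I_N -> (S * A) * S}.

Definition data_prob N (mu : S * A -> R) (P : S -> A -> S -> R) (D : dataset N) : R :=
  \prod_t (mu (D t).1 * P (D t).1.1 (D t).1.2 (D t).2).

Definition prob_event N mu P (E : dataset N -> Prop) : R :=
  \sum_(D : dataset N | `[< E D >]) data_prob mu P D.

Definition LambdaN N (phi : S -> A -> 'cV[R]_d) (D : dataset N) : 'M[R]_d :=
  (N%:R)^-1 *: 1%:M +
  (N%:R)^-1 *: \sum_t (phi (D t).1.1 (D t).1.2 *m (phi (D t).1.1 (D t).1.2)^T).

End LinearMDP.

(* Main.v *)
Require Import Defs.
From HB Require Import structures.
From mathcomp Require Import all_boot all_order all_algebra.
From mathcomp Require Import all_classical all_reals all_analysis.
Import Order.TTheory GRing.Theory Num.Theory.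
Local Open Scope ring_scope.
From mathcomp Require Import ring lra.


Lemma sd_distr (R : realType) (S A : finType) (P : S -> A -> S -> R)
  (pi : S -> A -> R) (rho0 : S -> R) t :
  (forall s a s', 0 <= P s a s') -> (forall s a, \sum_s' P s a s' = 1) ->
  is_policy pi -> is_distr rho0 -> is_distr (state_dist P pi rho0 t).
Proof.
move=> P0 P1 pol [r0 r1]; elim: t => [|t [x0 x1]] //=; split.
  by move=> s'; apply: sumr_ge0 => s _; apply: sumr_ge0 => a _;
     rewrite !mulr_ge0 //; case: (pol s).
rewrite exchange_big /=.
rewrite -x1; apply: eq_bigr => s _.
rewrite exchange_big /=.
transitivity (\sum_a state_dist P pi rho0 t s * pi s a).
  by apply: eq_bigr => a _; rewrite -big_distrr /= P1 mulr1.
by rewrite -big_distrr /=; case: (pol s) => _ ->; rewrite mulr1.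
Qed.

Lemma Pker_ge0 (R : realType) (S A : finType) d (phi : S -> A -> 'cV[R]_d) nu :
  (forall s a i, 0 <= phi s a i 0) -> (forall i, is_distr (nu i)) ->
  forall s a s', 0 <= Pker phi nu s a s'.
Proof.
move=> p0 nd s a s'; apply: sumr_ge0 => i _; rewrite mulr_ge0 //.
by case: (nd i).
Qed.

Lemma Pker_sum (R : realType) (S A : finType) d (phi : S -> A -> 'cV[R]_d) nu :
  (forall s a, \sum_i phi s a i 0 = 1) -> (forall i, is_distr (nu i)) ->
  forall s a, \sum_s' Pker phi nu s a s' = 1.
Proof.
move=> p1 nd s a; rewrite /Pker exchange_big /= -(p1 s a).
apply: eq_bigr => i _; rewrite -big_distrr /=; case: (nd i) => _ ->.
by rewrite mulr1.
Qed.

Definition qf {R : realType} {d : nat} (M : 'M[R]_d) (x : 'cV[R]_d) : R :=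
  (x^T *m M *m x) 0 0.

Lemma qfD {R : realType} {d : nat} (M1 M2 : 'M[R]_d) x :
  qf (M1 + M2) x = qf M1 x + qf M2 x.
Proof. by rewrite /qf mulmxDr mulmxDl mxE. Qed.

Lemma qfB {R : realType} {d : nat} (M1 M2 : 'M[R]_d) x :
  qf (M1 - M2) x = qf M1 x - qf M2 x.
Proof. by rewrite /qf mulmxBr mulmxBl mxE [in X in _ + X]mxE. Qed.

Lemma qfZ {R : realType} {d : nat} (c : R) (M : 'M[R]_d) x :
  qf (c *: M) x = c * qf M x.
Proof. by rewrite /qf -scalemxAr -scalemxAl mxE. Qed.

Lemma qfZx {R : realType} {d : nat} (c : R) (M : 'M[R]_d) x :
  qf M (c *: x) = c * c * qf M x.
Proof.
rewrite /qf linearZ /= mxE [(_ *: x)^T]linearZ /= -!scalemxAl mxE mulrA.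
done.
Qed.

Lemma qf1 {R : realType} {d : nat} (x : 'cV[R]_d) :
  qf 1%:M x = \sum_j x j 0 * x j 0.
Proof. by rewrite /qf mulmx1 mxE; apply: eq_bigr => j _; rewrite mxE. Qed.

Lemma rowdelta {R : realType} {d : nat} (u : 'rV[R]_d) i :
  (u *m (delta_mx i 0 : 'cV[R]_d)) 0 0 = u 0 i.
Proof. by rewrite -colE mxE. Qed.

Lemma qf_delta {R : realType} {d : nat} (M : 'M[R]_d) i :
  qf M (delta_mx i 0) = M i i.
Proof. by rewrite /qf trmx_delta -rowE rowdelta mxE. Qed.

Lemma qf_deltaii {R : realType} {d : nat} (x : 'cV[R]_d) i :
  qf (delta_mx i i) x = x i 0 * x i 0.
Proof.
rewrite /qf -(mul_delta_mx (0 : 'I_1)) mulmxA -mulmxA -rowE.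
rewrite mxE big_ord1 rowdelta !mxE.
done.
Qed.

Lemma mul_self_ge0 {R : realType} (x : R) : 0 <= x * x.
Proof. by rewrite -expr2 sqr_ge0. Qed.
Lemma sq_ge_one {R : realType} {d : nat} (x : 'cV[R]_d) i :
  x i 0 * x i 0 <= \sum_j x j 0 * x j 0.
Proof.
rewrite (bigD1 i) //= lerDl; apply: sumr_ge0 => j _; exact: mul_self_ge0.
Qed.

Lemma inv_bound {R : realType} {d : nat} (L : 'M[R]_d) (eps a : R) (i : 'I_d) :
  0 < eps -> 0 <= a ->
  (forall x : 'cV[R]_d, eps * \sum_j x j 0 * x j 0 + a * (x i 0 * x i 0) <= qf L x) ->
  L \in unitmx /\ 0 <= invmx L i i <= (eps + a)^-1.
Proof.
move=> e0 a0 H.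
have pos (x : 'cV[R]_d) : eps * \sum_j x j 0 * x j 0 <= qf L x.
  by apply: le_trans (H x); rewrite lerDl mulr_ge0 // mul_self_ge0.
have uL : L \in unitmx.
  rewrite -row_free_unit -kermx_eq0; apply/eqP/row_matrixP => p; rewrite row0.
  set u := row p (kermx L).
  have uL : u *m L = 0 by rewrite /u -row_mul mulmx_ker row0.
  have := pos u^T; rewrite /qf trmxK uL mul0mx mxE.

  rewrite pmulr_rle0 // => h.
  have h2 : \sum_j u^T j 0 * u^T j 0 = 0.
    by apply/eqP; rewrite eq_le h sumr_ge0 // => j _; apply: mul_self_ge0.
  apply/rowP => j; rewrite mxE.
  have := psumr_eq0P (fun j _ => mul_self_ge0 (u^T j 0)) h2 (i:=j) isT.
  by move/eqP; rewrite mulf_eq0 orbb !mxE => /eqP.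
split => //.
set x := invmx L *m (delta_mx i 0 : 'cV[R]_d).
have Lx : L *m x = delta_mx i 0 by rewrite /x mulmxA mulmxV // mul1mx.
have qx : qf L x = invmx L i i.
  rewrite /qf -mulmxA Lx rowdelta mxE /x -colE mxE //.
have xi : x i 0 = invmx L i i by rewrite /x -colE mxE.
have v0 : 0 <= invmx L i i.
  rewrite -qx; apply: le_trans (pos x); apply: mulr_ge0; first exact: ltW.
  by apply: sumr_ge0 => j _; apply: mul_self_ge0.
rewrite v0 /=.
set v := invmx L i i in v0 qx xi *.
have hv : (eps + a) * (v * v) <= v.
  rewrite -{1 2}xi -{1}qx mulrDl; apply: le_trans (H x); rewrite lerD2r.
  by rewrite ler_pM2l // sq_ge_one.
have ea : 0 < eps + a by rewrite ltr_wpDr.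
have [->|vn] := eqVneq v 0; first by rewrite invr_ge0 ltW.
have vp : 0 < v by rewrite lt_def vn v0.
rewrite -(mulr1 ((eps + a)^-1)) ler_pdivlMl //.
by move: hv; rewrite mulrA -[X in _ <= X](mul1r v) ler_pM2r.
Qed.

Lemma rank_diag_ge {R : realType} {d : nat} (c : 'I_d -> R) (M : 'M[R]_d) :
  (forall p q, M p q = if p == q then c p else 0) ->
  (#|[set i | c i != 0%R]| <= \rank M)%N.
Proof.
move=> HM; set K := [set i | c i != 0].
pose B : 'M[R]_(#|K|, d) := \matrix_(p, j) ((@enum_val _ (pred_of_set K) p == j)%:R).
pose B' : 'M[R]_(#|K|, d) :=
  \matrix_(p, j) ((@enum_val _ (pred_of_set K) p == j)%:R / c j).
have cK p : c (@enum_val _ (pred_of_set K) p) != 0.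
  by have := enum_valP p; rewrite inE.
have BM : B' *m M = B.
  apply/matrixP => p j; rewrite !mxE (bigD1 (enum_val p)) //= big1; last first.
    by move=> l /negbTE nl; rewrite !mxE eq_sym nl mul0r mul0r.
  rewrite !mxE eqxx mul1r addr0 HM.
  by case: eqP => _; [rewrite mulVf | rewrite mulr0].
have BB : B *m B^T = 1%:M.
  apply/matrixP => p q; rewrite !mxE.
  rewrite (bigD1 (enum_val p)) //= big1; last first.
    by move=> l /negbTE nl; rewrite !mxE eq_sym nl mul0r.
  rewrite !mxE eqxx mul1r addr0 (inj_eq enum_val_inj).
  by rewrite eq_sym.
have h1 : (#|K| <= \rank B)%N.
  by rewrite -{1}(mxrank1 R #|K|) -BB mxrankM_maxl.
apply: leq_trans h1 _; rewrite -BM; exact: mxrankM_maxr.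
Qed.


Lemma amgm_term {R : realType} (y t : R) : 0 < y ->
  2 * t <= y * (t * t) + y^-1.
Proof.
move=> yp; rewrite -(ler_pM2l yp) mulrDr mulfV ?gt_eqF //.
have := sqr_ge0 (y * t - 1); rewrite expr2 => h.
nra.
Qed.

Lemma card_sum_ind {R : realType} {d : nat} (P : pred 'I_d) :
  \sum_i (P i)%:R = (#|[set i | P i]|%:R : R).
Proof.
rewrite -sum1_card natr_sum [RHS]big_mkcond /=; apply: eq_bigr => i _.
by rewrite inE; case: (P i).
Qed.

Lemma final_arith {R : realType} {d : nat} (t c : 'I_d -> R) (C : R) (r : nat) :
  0 < C -> (forall i, 0 <= t i) -> (forall i, 0 <= c i) ->
  (forall i, c i = 0 -> t i = 0) ->
  (forall i, (C * d%:R) * (t i * t i) <= c i) -> \sum_i c i <= 1 ->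
  (#|[set i | c i != 0%R]| <= r)%N -> \sum_i t i <= Num.sqrt (r%:R / C).
Proof.
move=> C0 t0 c0 ct tc c1 kr.
set k := #|[set i | c i != 0%R]| in kr.
have [k0|kp] := posnP k.
  rewrite big1 ?sqrtr_ge0 // => i _; apply: ct; apply/eqP; apply: contraT => ci.
  by move: k0; rewrite /k; move/eqP; rewrite cards_eq0 => /eqP/setP/(_ i); rewrite !inE ci.
have dp : (0 < d)%N.
  by apply: leq_trans kp _; apply: leq_trans (max_card _) _; rewrite card_ord.
set X := C * d%:R.
have Xp : 0 < X by rewrite mulr_gt0 // ltr0n.
set al := Num.sqrt (k%:R / X).
have alp : 0 < al by rewrite sqrtr_gt0 divr_gt0 // ltr0n.
have al2 : al * al = k%:R / X by rewrite -expr2 sqr_sqrtr // divr_ge0 // ?ltr0n ?ltW.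
set y := al * X.
have yp : 0 < y by rewrite mulr_gt0.
have term i : 2 * t i <= y * (t i * t i) + (c i != 0)%:R / y.
  have [ci|ci] := eqVneq (c i) 0.
    by rewrite ct // !(mulr0, mul0r, add0r, addr0).
  by rewrite mul1r; apply: amgm_term.
have S1 : 2 * \sum_i t i <= y * \sum_i (t i * t i) + k%:R / y.
  rewrite mulr_sumr mulr_sumr /k -card_sum_ind mulr_suml -big_split /=.
  by apply: ler_sum => i _; apply: term.
have S2 : y * \sum_i (t i * t i) <= al.
  rewrite /y -mulrA mulr_sumr -[X in _ <= X]mulr1 ler_pM2l //.
  apply: le_trans c1; apply: ler_sum => i _; exact: tc.
have S3 : k%:R / y = al.
  have kE : k%:R = al * al * X by rewrite al2 divfK ?gt_eqF.
  rewrite /y kE; field.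
  by rewrite !gt_eqF.
have : 2 * \sum_i t i <= 2 * al by rewrite mulr2n mulrDl mul1r; lra.
rewrite ler_pM2l // => h; apply: (le_trans h).
rewrite ler_sqrt; last by rewrite divr_ge0 // ?ltr0n ?ltW.
rewrite /X invfM mulrA.
apply: (@le_trans _ _ (k%:R / C)).
  rewrite ler_pdivrMr ?ltr0n // ler_peMr ?ler1n //.
  by rewrite divr_ge0 ?ler0n // ltW.
by rewrite ler_pM2r ?invr_gt0 // ler_nat.
Qed.


Definition cc {R : realType} {S A : finType} {d : nat} (w : S -> A -> R)
  (phi : S -> A -> 'cV[R]_d) (i j : 'I_d) : R :=
  expSA w (fun s a => phi s a i 0 * phi s a j 0).

Lemma phie_outer {R : realType} {S A : finType} {d : nat}
  (phi : S -> A -> 'cV[R]_d) i j s a :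
  phie phi i s a *m (phie phi j s a)^T = (phi s a i 0 * phi s a j 0) *: delta_mx i j.
Proof.
rewrite /phie /e_ [(_ *: delta_mx j 0)^T]linearZ /= -scalemxAl -scalemxAr scalerA.
by rewrite trmx_delta mul_delta_mx.
Qed.

Lemma Sigma_ijE {R : realType} {S A : finType} {d : nat} (w : S -> A -> R)
  (phi : S -> A -> 'cV[R]_d) i j :
  Sigma_ij w phi i j = cc w phi i j *: delta_mx i j.
Proof.
rewrite /Sigma_ij /expSAmx /cc /expSA scaler_suml; apply: eq_bigr => s _.
rewrite scaler_suml; apply: eq_bigr => a _.
by rewrite phie_outer scalerA.
Qed.

Lemma cc_offdiag {R : realType} {S A : finType} {d : nat} (w : S -> A -> R)
  (phi : S -> A -> 'cV[R]_d) i j :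
  psd (Sigma_ij w phi i j) -> i != j -> cc w phi i j = 0.
Proof.
case=> sym _ ij; move: sym; rewrite Sigma_ijE linearZ /= trmx_delta.
move/(congr1 (fun M : 'M[R]_d => M i j)); rewrite !mxE !eqxx (negbTE ij) /=.
by rewrite mulr0 mulr1.
Qed.

Lemma cc_diag_ge0 {R : realType} {S A : finType} {d : nat} (w : S -> A -> R)
  (phi : S -> A -> 'cV[R]_d) i :
  psd (Sigma_ij w phi i i) -> 0 <= cc w phi i i.
Proof.
case=> _ h; have := h (delta_mx i 0); rewrite -/(qf _ _) qf_delta Sigma_ijE.
by rewrite !mxE !eqxx mulr1.
Qed.

Lemma SigmaE {R : realType} {S A : finType} {d : nat} (w : S -> A -> R)
  (phi : S -> A -> 'cV[R]_d) p q :
  Sigma w phi p q = cc w phi p q.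
Proof.
rewrite /Sigma /expSAmx /cc /expSA summxE; apply: eq_bigr => s _.
rewrite summxE; apply: eq_bigr => a _.
by rewrite !mxE big_ord1 !mxE.
Qed.

Lemma cc_row {R : realType} {S A : finType} {d : nat} (w : S -> A -> R)
  (phi : S -> A -> 'cV[R]_d) i :
  (forall s a, \sum_j phi s a j 0 = 1) ->
  \sum_j cc w phi i j = expSA w (fun s a => phi s a i 0).
Proof.
move=> H; rewrite /cc /expSA exchange_big; apply: eq_bigr => s _.
rewrite exchange_big; apply: eq_bigr => a _.
by rewrite -big_distrr /= -big_distrr /= H mulr1.
Qed.

Lemma prob_mono {R : realType} {S A : finType} {N : nat} (mu : S * A -> R)
  (P : S -> A -> S -> R) (E1 E2 : dataset S A N -> Prop) :
  (forall D : dataset S A N, 0 <= data_prob mu P D) -> (forall D, E1 D -> E2 D) ->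
  prob_event mu P E1 <= prob_event mu P E2.
Proof.
move=> h0 h12; rewrite /prob_event [X in _ <= X]big_mkcond [X in X <= _]big_mkcond /=.
apply: ler_sum => D _.
case: (asboolP (E1 D)) => e1; case: (asboolP (E2 D)) => e2 //.
by case: e2; apply: h12.
Qed.

Section OccMass.
Local Open Scope classical_set_scope.
Lemma geom_le {R : realType} {gamma : R} n : 0 < gamma < 1 ->
  \sum_(0 <= t < n) gamma ^+ t <= (1 - gamma)^-1.
Proof.
case/andP=> g0 g1; have h : 0 < 1 - gamma by rewrite subr_gt0.
rewrite -(mulr1 ((1 - gamma)^-1)) ler_pdivlMl // big_mkord.
have := subrX1 gamma n => e.
have -> : (1 - gamma) * \sum_(i < n) gamma ^+ i = 1 - gamma ^+ n.
  by apply: (can_inj opprK); rewrite opprB e -mulNr opprB.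
by rewrite lerBlDr lerDl exprn_ge0 // ltW.
Qed.

Lemma occ_mass (R : realType) (S A : finType) (P : S -> A -> S -> R)
  (gamma : R) (d0 : S -> R) (pi : S -> A -> R) :
  0 < gamma < 1 ->
  (forall s a s', 0 <= P s a s') -> (forall s a, \sum_s' P s a s' = 1) ->
  is_policy pi -> is_distr d0 ->
  \sum_s \sum_a occupancy P gamma d0 pi s a <= 1.
Proof.
move=> g01 P0 P1 pol dd; have /andP[g0 g1] := g01.
have h : 0 < 1 - gamma by rewrite subr_gt0.
set x := state_dist P pi d0.
have xd t : is_distr (x t) by exact: sd_distr.
set u := fun s a n => \sum_(0 <= t < n) gamma ^+ t * (x t s * pi s a).
have term0 : forall s a t, 0 <= gamma ^+ t * (x t s * pi s a).
  move=> s a t; apply: mulr_ge0; first exact/exprn_ge0/ltW.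
  by apply: mulr_ge0; [case: (xd t) | case: (pol s)].
have gE : forall n, \sum_s \sum_a u s a n = \sum_(0 <= t < n) gamma ^+ t.
  move=> n; rewrite /u.
  transitivity (\sum_(0 <= t < n) \sum_s \sum_a gamma ^+ t * (x t s * pi s a)).
    rewrite [RHS]exchange_big /=; apply: eq_bigr => s _.
    by rewrite [RHS]exchange_big.
  apply: eq_bigr => t _.
  under eq_bigr => s _ do rewrite -big_distrr /=.
  rewrite -big_distrr /= -[RHS]mulr1; congr (_ * _).
  case: (xd t) => _ <-; apply: eq_bigr => s _.
  by rewrite -big_distrr /=; case: (pol s) => _ ->; rewrite mulr1.
have ub : forall s a n, u s a n <= (1 - gamma)^-1.
  move=> s a n; apply: (le_trans _ (geom_le n g01)); rewrite -gE.
  rewrite (bigD1 s) //= (bigD1 a) //= -addrA lerDl.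
  have u0 s' a' : 0 <= u s' a' n by apply: sumr_ge0 => *; apply: term0.
  rewrite addr_ge0 //; apply: sumr_ge0 => *; rewrite ?u0 //.
  by apply: sumr_ge0 => *.
have cv : forall s a, cvgn (u s a).
  move=> s a; apply: nondecreasing_is_cvgn.
    apply/nondecreasing_seqP => n; rewrite /u big_nat_recr //= lerDl.
    exact: term0.
  by exists (1 - gamma)^-1 => _ [n _ <-]; apply: ub.
have cvsum : (fun n => \sum_s \sum_a u s a n) @ \oo -->
   \sum_s \sum_a limn (u s a).
  apply: cvg_big; first exact: add_continuous.
  move=> s _; apply: cvg_big; first exact: add_continuous.
  move=> a _; exact: cv.
have -> : \sum_s \sum_a occupancy P gamma d0 pi s a =
    (1 - gamma) * \sum_s \sum_a limn (u s a).
  rewrite big_distrr; apply: eq_bigr => s _; rewrite big_distrr.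
  by apply: eq_bigr.
rewrite -(cvg_lim _ cvsum) //.
rewrite -ler_pdivlMl // mulr1.
apply: limr_le; first exact: (cvgP _ cvsum).
by apply: nearW => n /=; rewrite gE; exact: geom_le.
Qed.

End OccMass.

Theorem mainTheorem10 (R : realType) (S A : finType) (d N : nat)
  (gamma : R) (d0 : S -> R) (r : S -> A -> R)
  (phi : S -> A -> 'cV[R]_d) (nu : 'I_d -> S -> R) (mu : S * A -> R)
  (pistar : S -> A -> R) (Csc delta : R) :
  0 < gamma < 1 ->
  is_distr d0 ->
  (forall s a i, 0 <= phi s a i 0) ->
  (forall s a, \sum_i phi s a i 0 = 1) ->
  (forall i, is_distr (nu i)) ->
  is_distr mu ->
  optimal_policy (Pker phi nu) gamma r pistar ->
  psd (\sum_sa mu sa *: (phi sa.1 sa.2 *m (phi sa.1 sa.2)^T)) ->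
  (forall i j, psd (Sigma_ij (occupancy (Pker phi nu) gamma d0 pistar) phi i j)) ->
  (0 < N)%N ->
  0 < Csc ->
  (* sufficient coverage assumption *)
  prob_event mu (Pker phi nu) (fun D : dataset S A N =>
     forall i, loewner_ge (LambdaN phi D)
       ((N%:R)^-1 *: 1%:M + (Csc * d%:R) *:
          Sigma_ij (occupancy (Pker phi nu) gamma d0 pistar) phi i i))
    >= 1 - delta ->
  prob_event mu (Pker phi nu) (fun D : dataset S A N =>
     \sum_i expSA (occupancy (Pker phi nu) gamma d0 pistar)
              (fun s a => mxnorm (invmx (LambdaN phi D)) (phie phi i s a))
     <= Num.sqrt ((\rank (Sigma (occupancy (Pker phi nu) gamma d0 pistar) phi))%:R / Csc))
    >= 1 - delta.
Proof.
move=> g01 dd phi0 phi1 nud mud [pol _] _ psdij Npos Cpos cov.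
set w := occupancy (Pker phi nu) gamma d0 pistar.
have P0 : forall s a s', 0 <= Pker phi nu s a s' by exact: Pker_ge0.
have P1 : forall s a, \sum_s' Pker phi nu s a s' = 1 by exact: Pker_sum.
apply: le_trans cov _; apply: prob_mono.
  move=> D; apply: prodr_ge0 => t _; apply: mulr_ge0; first by case: mud.
  exact: P0.
move=> D HD; set L := LambdaN phi D in HD *; clearbody L.
set c := fun i => cc w phi i i.
have c0 i : 0 <= c i by apply: cc_diag_ge0.
have cij i j : i != j -> cc w phi i j = 0 by move=> ij; apply: cc_offdiag.
have ci i : c i = expSA w (fun s a => phi s a i 0).
  rewrite -cc_row // (bigD1 i) //= big1 ?addr0 // => j /negbTE ji.
  by apply: cij; rewrite eq_sym ji.
have eps0 : 0 < (N%:R : R)^-1 by rewrite invr_gt0 ltr0n.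
have bnd i : L \in unitmx /\ 0 <= invmx L i i <= ((N%:R)^-1 + Csc * d%:R * c i)^-1.
  apply: inv_bound => //; first by rewrite mulr_ge0 // mulr_ge0 // ltW.
  move=> x; have := (HD i).2 x; rewrite -/(qf _ _) qfB qfD !qfZ qf1 Sigma_ijE qfZ.
  by rewrite qf_deltaii subr_ge0 mulrA.
set t := fun i => c i * Num.sqrt (invmx L i i).
have tE i : expSA w (fun s a => mxnorm (invmx L) (phie phi i s a)) = t i.
  rewrite /t ci /expSA mulr_suml; apply: eq_bigr => s _.
  rewrite mulr_suml; apply: eq_bigr => a _.
  rewrite /mxnorm -/(qf _ _) /phie qfZx qf_delta sqrtrM ?mul_self_ge0 //.
  by rewrite -expr2 sqrtr_sqr ger0_norm // mulrA.
rewrite (eq_bigr _ (fun i _ => tE i)).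
apply: final_arith => //.
- by move=> i; rewrite mulr_ge0 ?sqrtr_ge0.
- by move=> i /= h; rewrite /t /= h mul0r.
- move=> i; have [_ /andP[v0 vle]] := bnd i.
  rewrite /t [X in _ * X <= _]mulrACA -[Num.sqrt _ * _]expr2 sqr_sqrtr //.
  have [->|cn] := eqVneq (c i) 0; first by rewrite !(mul0r, mulr0).
  have cp : 0 < c i by rewrite lt_def cn c0.
  set v := invmx L i i in v0 vle *; set X := Csc * d%:R * c i.
  have X0 : 0 <= X by rewrite !mulr_ge0 // ltW.
  have hv : X * v <= 1.
    apply: (@le_trans _ _ (((N%:R)^-1 + X) * v)).
      by apply: ler_wpM2r => //; rewrite lerDr ltW.
    have p : 0 < (N%:R)^-1 + X by rewrite ltr_wpDr.
    by move: vle; rewrite -(ler_pM2l p) mulfV ?gt_eqF.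
  have -> : Csc * d%:R * (c i * c i * v) = c i * (X * v) by rewrite /X; ring.
  by rewrite -[X in _ <= X]mulr1 ler_wpM2l.
- rewrite (eq_bigr _ (fun i _ => ci i)).
  have -> : \sum_i expSA w (fun s a => phi s a i 0) = \sum_s \sum_a w s a.
    rewrite /expSA exchange_big; apply: eq_bigr => s _.
    rewrite exchange_big; apply: eq_bigr => a _.
    by rewrite -big_distrr /= phi1 mulr1.
  exact: occ_mass.
- apply: rank_diag_ge => p q; rewrite SigmaE.
  by case: eqP => [->|/eqP] //; apply: cij.
Qed.
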